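(* Let $(\mathbb{Z},H^+)$ be a simple component and let $N_H$ be the unique element of $H^+$ with $N_H-1\notin H^+$ and $N_H+k\in H^+$ for all $k\in\mathbb{Z}^+$. Let $a\in\mathbb{N}$, and let $p,c,d\in\mathbb{N}$ satisfy $\gcd(a,p)=\gcd(a,c)=\gcd(c,d)=1$, $pc\equiv pd\equiv1\pmod a$, $p\in H^+$, $pc>aN_H$ and $d>\max\{(a-1)pc+a(N_H-1),\ ac\}$. Let $G^+=aH^++p\langle c,d\rangle=\{ah+pz: h\in H^+, z\in\langle c,d\rangle\}$. Then for every integer $i$ with $0\le i\le a-1$ and every $x\in\mathbb{Z}\setminus H^+$ we have $ipc+ax\notin G^+$. In particular, setting $l_i=ipc+a(N_H-1)$ for $0\le i\le a-1$, the set $L_H=\{l_0,\dots,l_{a-1}\}$ satisfies $L_H\cap G^+=\emptyset$. Moreover, for each $0\le i\le a-1$, every integer congruent to $i$ modulo $a$ and greater than $l_i$ belongs to $G^+$.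
   Context: A simple component is a simple partially ordered abelian group of the form $(\mathbb{Z},P)$ (simple: every nonzero element $u$ of $P$ is an order-unit, i.e. for all $x$ there is $n$ with $nu\pm x\in P$); its cone $P$ is a submonoid of $\mathbb{Z}^+$ containing all sufficiently large integers. $\langle c,d\rangle$ is the submonoid of $\mathbb{Z}^+$ generated by $c$ and $d$. *)

(* Defs.v *)
From mathcomp Require Import all_boot all_order all_algebra.
Set Implicit Arguments. Unset Strict Implicit. Unset Printing Implicit Defensive.
Import Order.TTheory GRing.Theory Num.Theory.
Local Open Scope ring_scope.

(* A simple component (Z, P): P is a positive cone of a partial order on Z
   (0 in P, P + P ⊆ P, P ∩ -P = {0}), the partially ordered group is simple
   (every nonzero u ∈ P is an order-unit), P ⊆ Z^+ and P contains all
   sufficiently large integers. *)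
Definition is_order_unit (P : int -> Prop) (u : int) : Prop :=
  forall x : int, exists n : nat, P (u *+ n + x) /\ P (u *+ n - x).

Definition simple_component (P : int -> Prop) : Prop :=
  [/\ P 0 /\ (forall x y, P x -> P y -> P (x + y)),
      (forall x, P x -> P (- x) -> x = 0),
      (forall u, P u -> u != 0 -> is_order_unit P u),
      (forall x, P x -> 0 <= x)
    & (exists M : int, forall n : int, M <= n -> P n)].

Definition gen2 (c d : nat) (z : int) : Prop :=
  exists m n : nat, z = (m * c + n * d)%N%:Z.

Definition Gplus (H : int -> Prop) (a p c d : nat) (g : int) : Prop :=
  exists h z : int, H h /\ gen2 c d z /\ g = a%:Z * h + p%:Z * z.

(* Main.v *)
Require Import Defs.
From mathcomp Require Import all_boot all_order all_algebra.
From mathcomp Require Import zify.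
Import Order.TTheory GRing.Theory Num.Theory.
Local Open Scope ring_scope.

Theorem proposition4p3 (H : int -> Prop) (NH : int) (a p c d : nat) :
  simple_component H ->
  H NH -> ~ H (NH - 1) -> (forall k : nat, H (NH + k%:Z)) ->
  gcdn a p = 1%N -> gcdn a c = 1%N -> gcdn c d = 1%N ->
  (p * c = 1 %[mod a])%N -> (p * d = 1 %[mod a])%N ->
  H p%:Z ->
  a%:Z * NH < (p * c)%N%:Z ->
  Num.max ((a%:Z - 1) * (p * c)%N%:Z + a%:Z * (NH - 1)) (a * c)%N%:Z < d%:Z ->
  [/\ (forall (i : nat) (x : int), (i < a)%N -> ~ H x ->
         ~ Gplus H a p c d ((i * p * c)%N%:Z + a%:Z * x)),
      (forall i : nat, (i < a)%N ->
         ~ Gplus H a p c d ((i * p * c)%N%:Z + a%:Z * (NH - 1)))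
    & (forall (i : nat) (n : int), (i < a)%N ->
         (a%:Z %| n - i%:Z)%Z ->
         (i * p * c)%N%:Z + a%:Z * (NH - 1) < n ->
         Gplus H a p c d n)].
Proof.
move=> [[H0 HD] _ _ Hpos _] HN HN1 HNk gap gac gcd Hpc Hpd Hp Hlt Hmax.
have NH0 : 0 <= NH := Hpos _ HN.
have ge : forall y, NH <= y -> H y.
  move=> y hy; have : 0 <= y - NH by lia.
  case E: (y - NH) => [k|k] // _.
  have -> : y = NH + k%:Z by lia.
  exact: HNk.
have mulp : forall j : nat, H (j * p)%N%:Z.
  elim=> [|j IH]; first by rewrite mul0n.
  by rewrite mulSn PoszD; apply: HD.
have aNH : 0 <= a%:Z * NH by apply: mulr_ge0.
have pc1 : (0 < p * c)%N by rewrite -ltz_nat; exact: le_lt_trans aNH Hlt.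
have cong : (0 < a)%N -> exists t : nat, (p * c = 1 + t * a)%N.
  move=> a1; move/eqP: Hpc; rewrite eqn_mod_dvd // => /dvdnP [t ht].
  exists t; lia.
move: Hmax; rewrite gt_max => /andP [Hd _].
have part1 : forall (i : nat) (x : int), (i < a)%N -> ~ H x ->
         ~ Gplus H a p c d ((i * p * c)%N%:Z + a%:Z * x).
  move=> i x ia nHx [h [z [Hh [[m [n ->]] E]]]].
  have [t ht] := cong (leq_ltn_trans (leq0n i) ia).
  have xN : x < NH.
    rewrite ltNge; apply/negP => /ge; exact: nHx.
  have h0 := Hpos _ Hh.
  case: n E => [|n] E; last first.
    have p1 : (1 <= p)%N by move: pc1; rewrite muln_gt0 => /andP[].
    have i1 : i%:Z * (p * c)%N%:Z <= (a%:Z - 1) * (p * c)%N%:Z by apply: ler_wpM2r => //; lia.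
    have ax : a%:Z * x <= a%:Z * (NH - 1) by apply: ler_wpM2l => //; lia.
    have pz : (d <= p * (m * c + n.+1 * d))%N.
      apply: leq_trans (leq_pmull _ p1); rewrite mulSn; lia.
    have ah : 0 <= a%:Z * h by apply: mulr_ge0.
    move: E; rewrite -mulnA; clear -i1 ax pz ah Hd; lia.
  move: E; rewrite mul0n addn0 -mulnA -PoszM (mulnCA p m c) ht => E.
  set k : int := ((i%:Z - m%:Z) * t%:Z + x - h).
  have mk : m%:Z = i%:Z + a%:Z * k by rewrite /k; clear -E; lia.
  have k0 : 0 <= k.
    rewrite leNgt; apply/negP => kn.
    have : a%:Z * k <= a%:Z * (-1) by apply: ler_wpM2l => //; lia.
    lia.
  have xk : a%:Z * (x - (h + k * (1 + t * a)%N%:Z)) = 0.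
    clear -E mk; lia.
  move: xk => /eqP; rewrite mulf_eq0 => /orP [/eqP a0|/eqP xk]; first lia.
  case: k k0 mk xk => [kn|kn] // _ _ xk.
  apply: nHx; have -> : x = h + (kn * c * p)%N%:Z by rewrite -ht in xk; lia.
  by apply: HD => //; apply: mulp.
split => //.
  move=> i ia; apply: part1 => //.
move=> i n ia /dvdzP [q hq] hn.
have [t ht] := cong (leq_ltn_trans (leq0n i) ia).
set y : int := q - (i * t)%N%:Z.
have ny : n = (i * p * c)%N%:Z + a%:Z * y.
  rewrite /y; move: hq; rewrite -mulnA ht; lia.
have Hy : H y.
  apply: ge; rewrite ny in hn.
  have : a%:Z * (NH - 1) < a%:Z * y by lia.
  rewrite ltr_pM2l; last by rewrite ltz_nat; lia.
  lia.
exists y, (i * c)%N%:Z; split => //; split.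
  by exists i, 0%N; rewrite mul0n addn0.
rewrite ny; lia.
Qed.
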